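(* There is an absolute constant $C>0$ such that the following holds. Let $n\ge 1$, $r\ge 1$, $\delta>0$ with $\delta n\ge 1$, and $\hat\epsilon>0$. Let $P_\tau$ be a set of $n_\tau\le n$ points in $\mathbb{R}^2$ in general position, partitioned into classes (''cells'') each of size at most $n/r^2$; for $p\in P_\tau$ let $P_{\mu(p)}$ be the class of $p$. For each $p\in P_\tau$, list the $n_\tau-1$ other points of $P_\tau$ in clockwise angular order around $p$ and split this list into consecutive blocks ${\cal E}_0,\dots,{\cal E}_{z-1}$, each but the last containing exactly $\lceil 2\delta n\rceil$ points and the last containing at most $\lceil 2\delta n\rceil$ points. If $z\ge 3$, define the $z$ sectors ${\cal W}_j(p)={\cal E}_j\cup{\cal E}_{j+1}\cup{\cal E}_{j+2}$ (indices modulo $z$), $0\le j\le z-1$; if $z<3$, define a single sector ${\cal W}_0(p)=P_\tau\setminus\{p\}$. Call a sector ${\cal W}_j(p)$ rich if it contains at least $\hat\epsilon n/10$ points of $P_{\mu(p)}\setminus\{p\}$. Let $\Pi$ be the set of pairs $\{p,q\}\subseteq P_\tau$ such that $q$ lies in a rich sector of $p$ or $p$ lies in a rich sector of $q$. Then $$|\Pi|\le C\,\frac{\delta n^2}{r^2\hat\epsilon}.$$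
   Context: General position: no three points collinear and no two on a common vertical line. *)

(* Defs.v *)
From Stdlib Require Import Reals Lra Lia List Arith ZArith Bool.
Open Scope bool_scope.
Open Scope R_scope.

Definition point := (R * R)%type.

Definition ceilZ (x : R) : Z := (- Int_part (- x))%Z.

(* orientation determinant; three points are collinear iff it vanishes *)
Definition orient (a b c : point) : R :=
  (fst b - fst a) * (snd c - snd a) - (snd b - snd a) * (fst c - fst a).

Definition general_position (P : list point) : Prop :=
  (forall i j, (i < j < length P)%nat -> fst (nth i P (0,0)) <> fst (nth j P (0,0))) /\
  (forall i j k, (i < j)%nat -> (j < k)%nat -> (k < length P)%nat ->
     orient (nth i P (0,0)) (nth j P (0,0)) (nth k P (0,0)) <> 0).

(* l lists points in clockwise angular order around p (starting anywhere):
   q_i - p = rad_i (cos th_i, - sin th_i) with rad_i > 0 and the clockwise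
   angles th_i strictly increasing within one full turn. *)
Definition cw_sorted (p : point) (l : list point) : Prop :=
  exists th rad : nat -> R,
    (forall i, (i < length l)%nat ->
       0 < rad i /\
       fst (nth i l p) - fst p = rad i * cos (th i) /\
       snd (nth i l p) - snd p = - (rad i * sin (th i))) /\
    (forall i j, (i < j < length l)%nat -> th i < th j) /\
    (forall i, (i < length l)%nat -> th i < th 0%nat + 2 * PI).

(* number of sectors z = ceil(m / k) blocks for a list of m points, block size k *)
Definition nblocks (m k : nat) : nat := ((m + k - 1) / k)%nat.

(* the point at position i of the angular list (block index i / k) lies in
   sector W_j; z = number of blocks. *)
Definition in_sector (z k i j : nat) : bool :=
  if (3 <=? z)%nat then
    let b := (i / k)%nat in
    (b =? j)%nat || (b =? (j + 1) mod z)%nat || (b =? (j + 2) mod z)%nat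
  else (j =? 0)%nat.

Definition nsectors (z : nat) : nat := if (3 <=? z)%nat then z else 1%nat.

Definition sector_cell_count (mu : point -> nat) (p : point) (l : list point)
    (k j : nat) : nat :=
  let z := nblocks (length l) k in
  length (filter (fun i => in_sector z k i j && (mu (nth i l p) =? mu p)%nat)
                 (seq 0 (length l))).

Definition in_rich_sector (mu : point -> nat) (eps : R) (n : nat)
    (p : point) (l : list point) (k : nat) (q : point) : Prop :=
  let z := nblocks (length l) k in
  exists j, (j < nsectors z)%nat /\
    INR (sector_cell_count mu p l k j) >= eps * INR n / 10 /\
    exists i, (i < length l)%nat /\ nth i l p = q /\ in_sector z k i j = true.

(* Main.v *)
Require Import Defs.
From Stdlib Require Import Reals List Arith ZArith Lia Lra.
Open Scope R_scope.

Lemma sum_map_add {A} (f g : A -> nat) l :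
  list_sum (map (fun x => (f x + g x)%nat) l) = (list_sum (map f l) + list_sum (map g l))%nat.
Proof. induction l; simpl; lia. Qed.

Lemma sum_map_le {A} (f g : A -> nat) l :
  (forall x, In x l -> (f x <= g x)%nat) ->
  (list_sum (map f l) <= list_sum (map g l))%nat.
Proof. induction l; simpl; intros H; [lia|]. pose proof (H a (or_introl eq_refl)).
  assert (list_sum (map f l) <= list_sum (map g l))%nat by (apply IHl; auto). lia. Qed.

Lemma sum_map_const {A} c (l : list A) :
  list_sum (map (fun _ => c) l) = (c * length l)%nat.
Proof. induction l; simpl; lia. Qed.

Lemma len_filter_orb {A} (f g : A -> bool) l :
  (length (filter (fun x => f x || g x) l) <= length (filter f l) + length (filter g l))%nat.
Proof. induction l; simpl; [lia|]. destruct (f a), (g a); simpl; lia. Qed.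

Lemma len_filter_le {A} (f g : A -> bool) l :
  (forall x, In x l -> f x = true -> g x = true) ->
  (length (filter f l) <= length (filter g l))%nat.
Proof. induction l; simpl; intros H; [lia|].
  assert (IH := IHl (fun x Hx => H x (or_intror Hx))).
  destruct (f a) eqn:E; [rewrite (H a (or_introl eq_refl) E); simpl; lia|].
  destruct (g a); simpl; lia. Qed.

Lemma swap_sum (A : nat -> nat -> bool) (L J : list nat) :
  list_sum (map (fun j => length (filter (fun i => A i j) L)) J) =
  list_sum (map (fun i => length (filter (fun j => A i j) J)) L).
Proof.
  induction L as [|a L IH]; simpl.
  - rewrite (sum_map_const 0). lia.
  - rewrite <- IH.
    transitivity (list_sum (map (fun j => ((if A a j then 1 else 0) + length (filter (fun i => A i j) L))%nat) J)).
    + f_equal. apply map_ext. intros j. destruct (A a j); reflexivity.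
    + rewrite sum_map_add. f_equal. clear. induction J; simpl; auto. destruct (A a a0); simpl; lia.
Qed.

Lemma count_le1 (f : nat -> nat) b l :
  NoDup (map f l) -> (length (filter (fun j => f j =? b)%nat l) <= 1)%nat.
Proof.
  induction l as [|a l IH]; simpl; intros H; [lia|].
  inversion H; subst. destruct (f a =? b)%nat eqn:E; simpl.
  - apply Nat.eqb_eq in E. subst.
    assert (filter (fun j => f j =? f a)%nat l = nil).
    { destruct (filter (fun j => f j =? f a)%nat l) eqn:F; auto.
      assert (In n (filter (fun j => f j =? f a)%nat l)) by (rewrite F; left; auto).
      apply filter_In in H0 as [H0 H1]. apply Nat.eqb_eq in H1. exfalso. apply H2.
      rewrite <- H1. apply in_map; auto. }
    rewrite H0; simpl; lia.
  - auto.
Qed.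

Lemma mod_shift z j c : (j < z)%nat -> (c < z)%nat ->
  ((j + c) mod z = if (j + c <? z)%nat then j + c else j + c - z)%nat.
Proof.
  intros Hj Hc. destruct (j + c <? z)%nat eqn:E.
  - apply Nat.ltb_lt in E. apply Nat.mod_small; auto.
  - apply Nat.ltb_ge in E. replace (j + c)%nat with ((j + c - z) + 1 * z)%nat at 1 by lia.
    rewrite Nat.Div0.mod_add. apply Nat.mod_small. lia.
Qed.

Lemma nodup_shift z c : (c < z)%nat -> NoDup (map (fun j => (j + c) mod z)%nat (seq 0 z)).
Proof.
  intros Hc. apply NoDup_map_NoDup_ForallPairs; [|apply seq_NoDup].
  intros x y Hx Hy. apply in_seq in Hx, Hy.
  rewrite !mod_shift by lia.
  destruct (x + c <? z)%nat eqn:E1, (y + c <? z)%nat eqn:E2;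
  try apply Nat.ltb_lt in E1; try apply Nat.ltb_lt in E2;
  try apply Nat.ltb_ge in E1; try apply Nat.ltb_ge in E2; lia.
Qed.

Lemma nsec_count z k i :
  (length (filter (fun j => in_sector z k i j) (seq 0 (nsectors z))) <= 3)%nat.
Proof.
  unfold in_sector, nsectors. destruct (3 <=? z)%nat eqn:E.
  - apply Nat.leb_le in E.
    eapply Nat.le_trans. apply len_filter_orb.
    pose proof (len_filter_orb (fun j => i / k =? j)%nat (fun j => i / k =? (j+1) mod z)%nat (seq 0 z)).
    pose proof (count_le1 (fun j => (j+0) mod z)%nat (i/k) (seq 0 z) ltac:(apply nodup_shift; lia)).
    pose proof (count_le1 (fun j => (j+1) mod z)%nat (i/k) (seq 0 z) ltac:(apply nodup_shift; lia)).
    pose proof (count_le1 (fun j => (j+2) mod z)%nat (i/k) (seq 0 z) ltac:(apply nodup_shift; lia)).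
    assert (length (filter (fun j => i / k =? j)%nat (seq 0 z)) <= 1)%nat.
    { eapply Nat.le_trans; [|exact H0]. apply len_filter_le. intros x Hx Ht.
      apply in_seq in Hx. apply Nat.eqb_eq in Ht. apply Nat.eqb_eq. rewrite Nat.add_0_r, Nat.mod_small; lia. }
    assert (length (filter (fun j => i / k =? (j+1) mod z)%nat (seq 0 z)) <= 1)%nat.
    { eapply Nat.le_trans; [|exact H1]. apply len_filter_le. intros x Hx Ht.
      apply Nat.eqb_eq in Ht. apply Nat.eqb_eq. lia. }
    assert (length (filter (fun j => i / k =? (j+2) mod z)%nat (seq 0 z)) <= 1)%nat.
    { eapply Nat.le_trans; [|exact H2]. apply len_filter_le. intros x Hx Ht.
      apply Nat.eqb_eq in Ht. apply Nat.eqb_eq. lia. }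
    lia.
  - simpl. destruct (0 =? 0)%nat; simpl; lia.
Qed.

Lemma block_size k b m : (1 <= k)%nat ->
  (length (filter (fun i => b =? i / k)%nat (seq 0 m)) <= k)%nat.
Proof.
  intros Hk. apply Nat.le_trans with (length (seq (b*k) k)); [|rewrite length_seq; lia].
  apply NoDup_incl_length. apply NoDup_filter, seq_NoDup.
  intros x Hx. apply filter_In in Hx as [_ Hx]. apply Nat.eqb_eq in Hx.
  apply in_seq. pose proof (Nat.div_mod_eq x k). pose proof (Nat.mod_bound_pos x k ltac:(lia) ltac:(lia)).
  rewrite Hx. nia.
Qed.

Lemma sector_size z k j m : (1 <= k)%nat -> z = nblocks m k ->
  (length (filter (fun i => in_sector z k i j) (seq 0 m)) <= 3 * k)%nat.
Proof.
  intros Hk Hz. unfold in_sector. destruct (3 <=? z)%nat eqn:E.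
  - eapply Nat.le_trans. apply len_filter_orb.
    pose proof (len_filter_orb (fun i => i / k =? j)%nat (fun i => i / k =? (j+1) mod z)%nat (seq 0 m)).
    pose proof (block_size k j m Hk).
    pose proof (block_size k ((j+1) mod z) m Hk).
    pose proof (block_size k ((j+2) mod z) m Hk).
    assert (Hsym : forall b, length (filter (fun i => i / k =? b)%nat (seq 0 m)) = length (filter (fun i => b =? i / k)%nat (seq 0 m))).
    { intros b. f_equal. apply filter_ext. intros; apply Nat.eqb_sym. }
    rewrite !Hsym in *. lia.
  - apply Nat.leb_gt in E.
    eapply Nat.le_trans. apply filter_length_le. rewrite length_seq.
    unfold nblocks in Hz. pose proof (Nat.div_mod_eq (m + k - 1) k).
    pose proof (Nat.mod_bound_pos (m + k - 1) k ltac:(lia) ltac:(lia)). rewrite <- Hz in *. nia.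
Qed.

Definition richb mu eps n p l k j : bool :=
  if Rle_dec (eps * INR n / 10) (INR (sector_cell_count mu p l k j)) then true else false.

Definition Gpos mu eps n (p : point) (l : list point) k : list nat :=
  let z := nblocks (length l) k in
  filter (fun i => existsb (fun j => richb mu eps n p l k j && in_sector z k i j) (seq 0 (nsectors z)))
    (seq 0 (length l)).

Lemma rel_in_G mu eps n p l k q : in_rich_sector mu eps n p l k q ->
  exists i, In i (Gpos mu eps n p l k) /\ nth i l p = q.
Proof.
  intros (j & Hj & Hr & i & Hi & Hq & Hs). exists i. split; auto.
  unfold Gpos. apply filter_In. split. apply in_seq; lia.
  apply existsb_exists. exists j. split. apply in_seq; lia.
  rewrite Hs. unfold richb. destruct Rle_dec; auto. exfalso; lra.
Qed.

Lemma exists_filter_bound (R : nat -> bool) (A : nat -> nat -> bool) (I J : list nat) :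
  (length (filter (fun i => existsb (fun j => R j && A i j) J) I) <=
   list_sum (map (fun j => if R j then length (filter (fun i => A i j) I) else 0) J))%nat.
Proof.
  induction J as [|a J IH]; simpl.
  - induction I; simpl; auto.
  - eapply Nat.le_trans. apply (len_filter_orb (fun i => R a && A i a) (fun i => existsb (fun j => R j && A i j) J)).
    destruct (R a); simpl.
    + lia.
    + assert (forall I : list nat, length (filter (fun _ => false) I) = 0%nat) as Z by (induction I0; simpl; auto).
      rewrite Z. lia.
Qed.

Lemma G_len mu eps n p l k : (1 <= k)%nat ->
  (length (Gpos mu eps n p l k) <=
   3 * k * length (filter (richb mu eps n p l k) (seq 0 (nsectors (nblocks (length l) k)))))%nat.
Proof.
  intros Hk. unfold Gpos. eapply Nat.le_trans. apply exists_filter_bound.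
  generalize (seq 0 (nsectors (nblocks (length l) k))). intros J.
  induction J as [|a J IH]; simpl; [lia|].
  destruct (richb mu eps n p l k a); simpl.
  - pose proof (sector_size (nblocks (length l) k) k a (length l) Hk eq_refl). lia.
  - lia.
Qed.

Lemma rich_count mu eps n p l k J : 0 <= eps * INR n / 10 ->
  INR (length (filter (richb mu eps n p l k) J)) * (eps * INR n / 10) <=
  INR (list_sum (map (sector_cell_count mu p l k) J)).
Proof.
  intros H0. induction J as [|a J IH]; simpl; [lra|].
  rewrite plus_INR. unfold richb at 1. destruct Rle_dec; cbn [filter length].
  - rewrite S_INR. lra.
  - pose proof (pos_INR (sector_cell_count mu p l k a)). lra.
Qed.

Lemma sum_counts mu p l k :
  (list_sum (map (sector_cell_count mu p l k) (seq 0 (nsectors (nblocks (length l) k)))) <=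
   3 * length (filter (fun i => mu (nth i l p) =? mu p)%nat (seq 0 (length l))))%nat.
Proof.
  set (z := nblocks (length l) k).
  set (A := fun i j => (in_sector z k i j && (mu (nth i l p) =? mu p))%nat).
  change (list_sum (map (fun j => length (filter (fun i => A i j) (seq 0 (length l)))) (seq 0 (nsectors z))) <=
   3 * length (filter (fun i => mu (nth i l p) =? mu p)%nat (seq 0 (length l))))%nat.
  rewrite swap_sum. generalize (seq 0 (length l)). intros I.
  induction I as [|i I IH]; simpl; [lia|].
  unfold A at 1. destruct (mu (nth i l p) =? mu p)%nat; simpl.
  - assert (E : filter (fun j => in_sector z k i j && true) (seq 0 (nsectors z)) = filter (fun j => in_sector z k i j) (seq 0 (nsectors z))).
    { apply filter_ext. intros; apply Bool.andb_true_r. }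
    rewrite E. pose proof (nsec_count z k i). lia.
  - assert (E : length (filter (fun j => in_sector z k i j && false) (seq 0 (nsectors z))) = 0%nat).
    { generalize (seq 0 (nsectors z)). induction l0; simpl; auto. rewrite Bool.andb_false_r; auto. }
    rewrite E. lia.
Qed.

Lemma nodup_map_nth {A} (l : list A) d I :
  NoDup l -> NoDup I -> (forall i, In i I -> (i < length l)%nat) -> NoDup (map (fun i => nth i l d) I).
Proof.
  intros Hl HI Hb. apply NoDup_map_NoDup_ForallPairs; auto.
  intros x y Hx Hy. apply (proj1 (NoDup_nth l d) Hl); auto.
Qed.

Lemma cell_bound (mu : point -> nat) (p : point) (l P : list point) :
  NoDup l -> incl l P ->
  (length (filter (fun i => mu (nth i l p) =? mu p)%nat (seq 0 (length l))) <=
   length (filter (fun x => mu x =? mu p)%nat P))%nat.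
Proof.
  intros Hl Hi.
  rewrite <- (length_map (fun i => nth i l p)).
  apply NoDup_incl_length.
  - apply nodup_map_nth; auto. apply NoDup_filter, seq_NoDup.
    intros i Hin. apply filter_In in Hin as [Hin _]. apply in_seq in Hin. lia.
  - intros x Hx. apply in_map_iff in Hx as (i & <- & Hin).
    apply filter_In in Hin as [Hin Hm]. apply in_seq in Hin.
    apply filter_In. split; auto. apply Hi. apply nth_In. lia.
Qed.

Lemma ceil_bound x : 2 <= x ->
  x <= INR (Z.to_nat (ceilZ x)) < x + 1 /\ (1 <= Z.to_nat (ceilZ x))%nat.
Proof.
  intros Hx. unfold ceilZ, Int_part.
  destruct (archimed (- x)) as [H1 H2].
  set (c := (- (up (- x) - 1))%Z).
  assert (Hc : IZR c = 1 - IZR (up (- x))).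
  { unfold c. rewrite opp_IZR, minus_IZR. lra. }
  assert (Hp : (0 < c)%Z) by (apply lt_0_IZR; lra).
  assert (Hk : INR (Z.to_nat c) = IZR c).
  { rewrite INR_IZR_INZ, Z2Nat.id; auto; lia. }
  rewrite Hk. split; [lra|].
  apply INR_le. rewrite Hk. simpl. lra.
Qed.

Lemma sum_real {A} (f : A -> nat) l B :
  (forall x, In x l -> INR (f x) <= B) ->
  INR (list_sum (map f l)) <= INR (length l) * B.
Proof.
  induction l as [|a l IH]; intros H; [simpl; lra|].
  change (list_sum (map f (a::l))) with (f a + list_sum (map f l))%nat. change (length (a::l)) with (S (length l)).
  rewrite plus_INR, S_INR.
  pose proof (H a (or_introl eq_refl)). pose proof (IH (fun x Hx => H x (or_intror Hx))). lra.
Qed.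

Definition Pdec (x y : point) : {x = y} + {x <> y}.
Proof.
  destruct x as [a b], y as [c d].
  destruct (Req_dec_T a c) as [->|E]; [|right; congruence].
  destruct (Req_dec_T b d) as [->|E]; [left; auto|right; congruence].
Defined.

Lemma G_bound (mu : point -> nat) eps n r (P : list point) k (p : point) (l : list point) :
  (1 <= n)%nat -> 0 < eps -> 0 < r -> (1 <= k)%nat -> NoDup l -> incl l P ->
  (forall c, INR (length (filter (fun x => mu x =? c)%nat P)) <= INR n / r ^ 2) ->
  INR (length (Gpos mu eps n p l k)) <= 3 * INR k * (30 / (eps * r ^ 2)).
Proof.
  intros Hn He Hr Hk Hl Hi Hc.
  set (cnt := length (filter (richb mu eps n p l k) (seq 0 (nsectors (nblocks (length l) k))))).
  assert (Hnr : 1 <= INR n) by (apply (le_INR 1); auto).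
  assert (H1 : INR (length (Gpos mu eps n p l k)) <= 3 * INR k * INR cnt).
  { assert (E : INR (3 * k * cnt) = 3 * INR k * INR cnt) by (rewrite !mult_INR; simpl; ring).
    rewrite <- E. apply le_INR. apply G_len; auto. }
  assert (H2 := rich_count mu eps n p l k (seq 0 (nsectors (nblocks (length l) k)))).
  assert (H2' : INR cnt * (eps * INR n / 10) <=
     INR (list_sum (map (sector_cell_count mu p l k) (seq 0 (nsectors (nblocks (length l) k)))))).
  { apply H2. apply Rmult_le_pos; [|lra]. apply Rmult_le_pos; lra. }
  assert (H3 := le_INR _ _ (sum_counts mu p l k)). rewrite mult_INR in H3.
  assert (H4 := le_INR _ _ (cell_bound mu p l P Hl Hi)).
  assert (H5 := Hc (mu p)).
  assert (Hm : INR cnt * (eps * INR n / 10) <= 3 * (INR n / r ^ 2)).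
  { replace (INR 3) with 3 in H3 by (simpl; ring). lra. }
  assert (Hr2 : 0 < r ^ 2) by (apply pow_lt; lra).
  assert (Hm2 : INR cnt * (eps * INR n / 10) * (10 * r ^ 2) <= 3 * (INR n / r ^ 2) * (10 * r ^ 2)).
  { apply Rmult_le_compat_r; lra. }
  replace (3 * (INR n / r ^ 2) * (10 * r ^ 2)) with (30 * INR n) in Hm2 by (field; lra).
  replace (INR cnt * (eps * INR n / 10) * (10 * r ^ 2)) with ((INR cnt * eps * r ^ 2) * INR n) in Hm2 by (field; lra).
  assert (Hm3 : INR cnt * eps * r ^ 2 <= 30).
  { apply (Rmult_le_reg_r (INR n)); lra. }
  assert (Hm4 : INR cnt <= 30 / (eps * r ^ 2)).
  { apply (Rmult_le_reg_r (eps * r ^ 2)). apply Rmult_lt_0_compat; lra.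
    replace (30 / (eps * r ^ 2) * (eps * r ^ 2)) with 30 by (field; lra). lra. }
  eapply Rle_trans; [exact H1|]. apply Rmult_le_compat_l; [|exact Hm4].
  pose proof (pos_INR k). lra.
Qed.

Theorem mainTheorem7 :
  exists C : R, 0 < C /\
  forall (n : nat) (r delta eps : R) (P : list point) (mu : point -> nat)
         (ord : point -> list point),
    (1 <= n)%nat -> 1 <= r -> 0 < delta -> delta * INR n >= 1 -> 0 < eps ->
    NoDup P -> (length P <= n)%nat -> general_position P ->
    (* cells: classes of mu, each of size at most n / r^2 *)
    (forall c : nat,
       INR (length (filter (fun x => (mu x =? c)%nat) P)) <= INR n / r ^ 2) ->
    (* ord p = the other points of P in clockwise angular order around p *)
    (forall p, In p P ->
       NoDup (ord p) /\ (forall q, In q (ord p) <-> (In q P /\ q <> p)) /\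
       cw_sorted p (ord p)) ->
    let k := Z.to_nat (ceilZ (2 * delta * INR n)) in
    let Rel p q := in_rich_sector mu eps n p (ord p) k q in
    (* any list of distinct unordered pairs {P_i, P_j} (i < j) belonging to Pi *)
    forall L : list (nat * nat),
      NoDup L ->
      (forall ij, In ij L ->
         (fst ij < snd ij < length P)%nat /\
         (Rel (nth (fst ij) P (0,0)) (nth (snd ij) P (0,0)) \/
          Rel (nth (snd ij) P (0,0)) (nth (fst ij) P (0,0)))) ->
      INR (length L) <= C * (delta * INR n ^ 2 / (r ^ 2 * eps)).
Proof.
  exists 540. split; [lra|].
  intros n r delta eps P mu ord Hn Hr Hd Hdn He HP HPn _ Hc Hord k Rel L HL HLi.
  destruct (ceil_bound (2 * delta * INR n) ltac:(lra)) as [[Hk1 Hk2] Hk].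
  fold k in Hk1, Hk2, Hk.
  set (N := length P). set (d := (0,0) : point).
  set (T := fun a => let pa := nth a P d in map (fun i => nth i (ord pa) pa) (Gpos mu eps n pa (ord pa) k)).
  set (D := fun a => filter (fun b => if in_dec Pdec (nth b P d) (T a) then true else false) (seq 0 N)).
  set (E1 := flat_map (fun a => map (fun b => (a, b)) (D a)) (seq 0 N)).
  set (E2 := flat_map (fun b => map (fun a => (a, b)) (D b)) (seq 0 N)).
  assert (Hnr : 1 <= INR n) by (apply (le_INR 1); auto).
  set (B := 3 * INR k * (30 / (eps * r ^ 2))).
  assert (HD : forall a, In a (seq 0 N) -> INR (length (D a)) <= B).
  { intros a Ha. apply in_seq in Ha.
    set (pa := nth a P d).
    assert (HpaP : In pa P) by (apply nth_In; unfold N in Ha; lia).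
    destruct (Hord pa HpaP) as (Hnd & Hmem & _).
    assert (Hle : (length (D a) <= length (T a))%nat).
    { rewrite <- (length_map (fun b => nth b P d)). apply NoDup_incl_length.
      - apply nodup_map_nth; auto. apply NoDup_filter, seq_NoDup.
        intros i Hi. apply filter_In in Hi as [Hi _]. apply in_seq in Hi. unfold N in Hi. lia.
      - intros x Hx. apply in_map_iff in Hx as (b & <- & Hb).
        apply filter_In in Hb as [_ Hb]. destruct in_dec; congruence. }
    eapply Rle_trans. apply le_INR, Hle.
    unfold T. rewrite length_map. fold pa.
    apply G_bound with (P := P); auto; try lra.
    intros q Hq. apply Hmem in Hq. tauto. }
  assert (HE : forall E : list (nat * nat), E = E1 \/ E = E2 -> INR (length E) <= INR N * B).
  { intros E [-> | ->]; unfold E1, E2; rewrite length_flat_map;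
      replace (INR N) with (INR (length (seq 0 N))) by (rewrite length_seq; auto);
      apply (sum_real (A:=nat)); intros x Hx; rewrite length_map; apply HD; auto. }
  assert (Hincl : incl L (E1 ++ E2)).
  { intros [a b] Hab. destruct (HLi _ Hab) as [Hlt [HR | HR]]; simpl in Hlt, HR; apply in_or_app.
    - left. apply rel_in_G in HR as (i & Hi & Hq).
      unfold E1. apply in_flat_map. exists a. split. apply in_seq; unfold N; lia.
      apply in_map. unfold D. apply filter_In. split. apply in_seq; unfold N; lia.
      destruct in_dec as [|Hn']; auto. exfalso. apply Hn'. unfold T. simpl.
      apply in_map_iff. exists i. split; auto.
    - right. apply rel_in_G in HR as (i & Hi & Hq).
      unfold E2. apply in_flat_map. exists b. split. apply in_seq; unfold N; lia.
      apply (in_map (fun a0 => (a0, b))). unfold D. apply filter_In. split. apply in_seq; unfold N; lia.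
      destruct in_dec as [|Hn']; auto. exfalso. apply Hn'. unfold T. simpl.
      apply in_map_iff. exists i. split; auto. }
  pose proof (NoDup_incl_length HL Hincl) as Hlen. rewrite length_app in Hlen.
  apply le_INR in Hlen. rewrite plus_INR in Hlen.
  pose proof (HE E1 (or_introl eq_refl)). pose proof (HE E2 (or_intror eq_refl)).
  assert (HNn : INR N <= INR n) by (apply le_INR; auto).
  assert (Hr2 : 0 < r ^ 2) by (apply pow_lt; lra).
  assert (HB0 : 0 <= B).
  { unfold B. apply Rmult_le_pos. pose proof (pos_INR k); lra.
    apply Rlt_le, Rdiv_lt_0_compat; [lra|]. apply Rmult_lt_0_compat; lra. }
  assert (HBk : B <= 3 * (3 * delta * INR n) * (30 / (eps * r ^ 2))).
  { unfold B. apply Rmult_le_compat_r. apply Rlt_le, Rdiv_lt_0_compat; [lra|]. apply Rmult_lt_0_compat; lra.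
    lra. }
  assert (HNB : INR N * B <= INR n * (3 * (3 * delta * INR n) * (30 / (eps * r ^ 2)))).
  { apply Rmult_le_compat; auto. apply pos_INR. }
  replace (540 * (delta * INR n ^ 2 / (r ^ 2 * eps))) with
    (2 * (INR n * (3 * (3 * delta * INR n) * (30 / (eps * r ^ 2))))) by (field; lra).
  lra.
Qed.
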